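(* Let $\mathfrak{C}\subset(\mathbb{C}\setminus\{0\})^2\times\mathbb{C}$ be the hypersurface in coordinates $(s,u,c)$ defined by $$0=(s-s^{-1})(u-u^{-1})+c\,(s^{-2}u^{-2}-u^{-2}-s^{-2}+4-s^2-u^2+s^2u^2)+c^2(2s^{-1}u^{-1}-su^{-1}-s^{-1}u+2su)+c^3,$$ let $e:\mathfrak{C}\to(\mathbb{C}\setminus\{0\})^4$, $e(s,u,c)=(s,t,u,v)$ with $$t=s^{-2}-s^{-2}u^2+u^2+c\,(2s^{-1}u+s^{-3}u^{-1}-s^{-3}u)+c^2s^{-2},\qquad v=u^{-2}-u^{-2}s^2+s^2+c\,(2u^{-1}s+u^{-3}s^{-1}-u^{-3}s)+c^2u^{-2},$$ and let $\mathfrak{E}_0$ be the Zariski closure of $e(\mathfrak{C})$. Let $\overline{\mathfrak{C}}\subset(\mathbb{C}\setminus\{0\})^2\times\mathbb{C}$ be the hypersurface in coordinates $(\bar s,\bar u,d)$ defined by $$0=\bar s\bar u(\bar s-1)(\bar u-1)+d\,(1-\bar s-\bar u+4\bar s\bar u-\bar s^2\bar u-\bar s\bar u^2+\bar s^2\bar u^2)+d^2(2-\bar s-\bar u+2\bar s\bar u)+d^3,$$ let $\bar e:\overline{\mathfrak{C}}\to(\mathbb{C}\setminus\{0\})^4$, $\bar e(\bar s,\bar u,d)=(\bar s,\bar t,\bar u,\bar v)$ with $$\bar t=\bar s^{-1}-\bar s^{-1}\bar u+\bar u+d\,(2\bar s^{-1}+\bar s^{-2}\bar u^{-1}-\bar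 s^{-2})+d^2\bar s^{-2}\bar u^{-1},\qquad \bar v=\bar u^{-1}-\bar u^{-1}\bar s+\bar s+d\,(2\bar u^{-1}+\bar u^{-2}\bar s^{-1}-\bar u^{-2})+d^2\bar u^{-2}\bar s^{-1},$$ and let $\overline{\mathfrak{E}}_0$ be the Zariski closure of $\bar e(\overline{\mathfrak{C}})$. Then $\mathfrak{C}$ and $\mathfrak{E}_0$ are birationally equivalent, and $\overline{\mathfrak{C}}$ and $\overline{\mathfrak{E}}_0$ are birationally equivalent.
   Context: Here $W$ is the complement of the right-handed Whitehead link, with $\pi_1(W)=\langle\mathcal{M}_0,\mathcal{M}_1\mid \mathcal{M}_1\mathcal{M}_0\mathcal{M}_1\mathcal{M}_0^{-1}\mathcal{M}_1^{-1}\mathcal{M}_0^{-1}\mathcal{M}_1\mathcal{M}_0=\mathcal{M}_0\mathcal{M}_1\mathcal{M}_0^{-1}\mathcal{M}_1^{-1}\mathcal{M}_0^{-1}\mathcal{M}_1\mathcal{M}_0\mathcal{M}_1\rangle$. $\mathfrak{C}$ is the (irreducible) variety of representations $\rho(\mathcal{M}_0)=\begin{pmatrix}s&c\\0&s^{-1}\end{pmatrix}$, $\rho(\mathcal{M}_1)=\begin{pmatrix}u&0\\1&u^{-1}\end{pmatrix}$ into $SL_2(\mathbb{C})$, and $\overline{\mathfrak{C}}$ the analogous variety of representations $\mathcal{M}_0\mapsto\begin{pmatrix}\bar s&d\\0&1\end{pmatrix}$, $\mathcal{M}_1\mapsto\begin{pmatrix}\bar u&0\\1&1\end{pmatrix}$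 into $GL_2(\mathbb{C})$ (corresponding to $PSL_2(\mathbb{C})$-representations). The maps $e,\bar e$ record the upper-left entries of the images of $\mathcal{M}_0$, $\mathcal{L}_0^t$, $\mathcal{M}_1$, $\mathcal{L}_1^t$, where $\mathcal{L}_0^t=\mathcal{M}_0^{-1}\mathcal{M}_1\mathcal{M}_0\mathcal{M}_1^{-1}\mathcal{M}_0^{-1}\mathcal{M}_1^{-1}\mathcal{M}_0\mathcal{M}_1$ and $\mathcal{L}_1^t=\mathcal{M}_1^{-1}\mathcal{M}_0\mathcal{M}_1\mathcal{M}_0^{-1}\mathcal{M}_1^{-1}\mathcal{M}_0^{-1}\mathcal{M}_1\mathcal{M}_0$ are the null-homologous longitudes; $\mathfrak{E}_0$ and $\overline{\mathfrak{E}}_0$ are the components of the $SL_2(\mathbb{C})$- and $PSL_2(\mathbb{C})$-eigenvalue varieties of $W$ corresponding to the Dehn surgery component. *)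

(* Defs.v *)
From HB Require Import structures.
From mathcomp Require Import all_boot all_order all_algebra all_field.
From mathcomp Require Import mpoly.
Set Implicit Arguments. Unset Strict Implicit. Unset Printing Implicit Defensive.
Import Order.TTheory GRing.Theory.
Local Open Scope ring_scope.

Section AffineGeometry.
Variable K : fieldType.

Definition pt (n : nat) := 'I_n -> K.

Definition torus (n : nat) (x : pt n) : Prop := forall i, x i != 0.

Definition zclosure (n : nat) (S : pt n -> Prop) (x : pt n) : Prop :=
  forall p : {mpoly K[n]}, (forall y, S y -> p.@[y] = 0) -> p.@[x] = 0.

Definition zopen (n : nat) (O : pt n -> Prop) : Prop :=
  exists P : {mpoly K[n]} -> Prop,
    forall x, O x <-> exists p, P p /\ p.@[x] != 0.

Definition dense_open_in (n : nat) (U X : pt n -> Prop) : Prop :=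
  (exists O, zopen O /\ forall x, U x <-> (X x /\ O x)) /\
  (forall x, X x -> zclosure U x).

Definition rat_eval (m n : nat) (a b : 'I_n -> {mpoly K[m]}) (x : pt m) : pt n :=
  fun i => (a i).@[x] / (b i).@[x].
Definition rat_defined (m n : nat) (b : 'I_n -> {mpoly K[m]}) (x : pt m) : Prop :=
  forall i, (b i).@[x] != 0.

Definition birational (m n : nat) (X : pt m -> Prop) (Y : pt n -> Prop) : Prop :=
  exists (U : pt m -> Prop) (V : pt n -> Prop)
         (fa fb : 'I_n -> {mpoly K[m]}) (ga gb : 'I_m -> {mpoly K[n]}),
    [/\ dense_open_in U X /\ dense_open_in V Y,
        forall x, U x -> rat_defined fb x /\ V (rat_eval fa fb x),
        forall y, V y -> rat_defined gb y /\ U (rat_eval ga gb y),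
        forall x, U x -> forall i, rat_eval ga gb (rat_eval fa fb x) i = x i
      & forall y, V y -> forall j, rat_eval fa fb (rat_eval ga gb y) j = y j].

Definition c0 {n} : 'I_n.+1 := @Ordinal n.+1 0 isT.
Definition c1 {n} : 'I_n.+2 := @Ordinal n.+2 1 isT.
Definition c2 {n} : 'I_n.+3 := @Ordinal n.+3 2 isT.
Definition c3 {n} : 'I_n.+4 := @Ordinal n.+4 3 isT.

Definition C_eq (s u c : K) : K :=
  (s - s^-1) * (u - u^-1)
  + c * (s ^- 2 * u ^- 2 - u ^- 2 - s ^- 2 + 4 - s ^+ 2 - u ^+ 2 + s ^+ 2 * u ^+ 2)
  + c ^+ 2 * (2 * s^-1 * u^-1 - s * u^-1 - s^-1 * u + 2 * s * u)
  + c ^+ 3.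

Definition frakC (x : pt 3) : Prop :=
  x c0 != 0 /\ x c1 != 0 /\ C_eq (x c0) (x c1) (x c2) = 0.

Definition e_t (s u c : K) : K :=
  s ^- 2 - s ^- 2 * u ^+ 2 + u ^+ 2
  + c * (2 * s^-1 * u + s ^- 3 * u^-1 - s ^- 3 * u) + c ^+ 2 * s ^- 2.
Definition e_v (s u c : K) : K :=
  u ^- 2 - u ^- 2 * s ^+ 2 + s ^+ 2
  + c * (2 * u^-1 * s + u ^- 3 * s^-1 - u ^- 3 * s) + c ^+ 2 * u ^- 2.

Definition emap (x : pt 3) : pt 4 :=
  fun i => match val i with
           | 0 => x c0
           | 1 => e_t (x c0) (x c1) (x c2)
           | 2 => x c1
           | _ => e_v (x c0) (x c1) (x c2)
           end.

Definition frakE0 (y : pt 4) : Prop :=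
  torus y /\ zclosure (fun z => exists x, frakC x /\ forall i, z i = emap x i) y.

Definition Cbar_eq (s u d : K) : K :=
  s * u * (s - 1) * (u - 1)
  + d * (1 - s - u + 4 * s * u - s ^+ 2 * u - s * u ^+ 2 + s ^+ 2 * u ^+ 2)
  + d ^+ 2 * (2 - s - u + 2 * s * u)
  + d ^+ 3.

Definition frakCbar (x : pt 3) : Prop :=
  x c0 != 0 /\ x c1 != 0 /\ Cbar_eq (x c0) (x c1) (x c2) = 0.

Definition ebar_t (s u d : K) : K :=
  s^-1 - s^-1 * u + u + d * (2 * s^-1 + s ^- 2 * u^-1 - s ^- 2)
  + d ^+ 2 * s ^- 2 * u^-1.
Definition ebar_v (s u d : K) : K :=
  u^-1 - u^-1 * s + s + d * (2 * u^-1 + u ^- 2 * s^-1 - u ^- 2)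
  + d ^+ 2 * u ^- 2 * s^-1.

Definition ebarmap (x : pt 3) : pt 4 :=
  fun i => match val i with
           | 0 => x c0
           | 1 => ebar_t (x c0) (x c1) (x c2)
           | 2 => x c1
           | _ => ebar_v (x c0) (x c1) (x c2)
           end.

Definition frakE0bar (y : pt 4) : Prop :=
  torus y /\ zclosure (fun z => exists x, frakCbar x /\ forall i, z i = ebarmap x i) y.

End AffineGeometry.

(* Main.v *)
Require Import Defs.
From mathcomp Require Import all_boot all_order all_algebra all_field.
From mathcomp Require Import mpoly.
From mathcomp Require Import ring.
Set Implicit Arguments. Unset Strict Implicit. Unset Printing Implicit Defensive.
Import GRing.Theory.
Local Open Scope ring_scope.

Section Gen.
Variable K : closedFieldType.
Hypothesis charK : [pchar K] =i pred0.

Lemma cubic_sep (a b d r0 r1 r2 : K) :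
  18*a*b*d - 4*a^+3*d + a^+2*b^+2 - 4*b^+3 - 27*d^+2 != 0 ->
  (forall c : K, c^+3 + a*c^+2 + b*c + d = 0 -> r0 + r1*c + r2*c^+2 = 0) ->
  [/\ r0 = 0, r1 = 0 & r2 = 0].
Proof.
move=> hD hR.
have [z1 hz1] := @solve_monicpoly K 3 (fun i => if i == 0%N then - d else if i == 1%N then -b else -a) isT.
rewrite !big_ord_recr big_ord0 /= in hz1.
pose al := a + z1; pose be := b + al * z1.
have [z2 hz2] := @solve_monicpoly K 2 (fun i => if i == 0%N then - be else - al) isT.
rewrite !big_ord_recr big_ord0 /= in hz2.
pose z3 := - al - z2.
have ea : a = - (z1 + z2 + z3) by rewrite /z3 /al; ring.
have eb : b = z1*z2 + z1*z3 + z2*z3.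
  rewrite /z3 /al. move: hz2; rewrite /be /al => hz2. 
  have : b = - z2^+2 - (a+z1)*z2 - (a+z1)*z1 + 0 by rewrite hz2; ring.
  move=> ->; ring.
have ed : d = - z1*z2*z3.
  have : d = - z1^+3 - a * z1^+2 - b*z1 by rewrite hz1; ring.
  move=> ->; rewrite ea eb; ring.
have hF c : c^+3 + a*c^+2 + b*c + d = (c - z1)*(c - z2)*(c - z3) by rewrite ea eb ed; ring.
have hDz : 18*a*b*d - 4*a^+3*d + a^+2*b^+2 - 4*b^+3 - 27*d^+2 =
   ((z1 - z2)*(z1-z3)*(z2-z3))^+2 by rewrite ea eb ed; ring.
rewrite hDz expf_eq0 /= !mulf_eq0 !negb_or !subr_eq0 in hD.
case/andP: hD => /andP[h12 h13] h23.
have R1 : r0 + r1*z1 + r2*z1^+2 = 0 by apply: hR; rewrite hF; ring.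
have R2 : r0 + r1*z2 + r2*z2^+2 = 0 by apply: hR; rewrite hF; ring.
have R3 : r0 + r1*z3 + r2*z3^+2 = 0 by apply: hR; rewrite hF; ring.
have e12 : (z1 - z2) * (r1 + r2 * (z1 + z2)) = 0.
  have -> : (z1 - z2) * (r1 + r2 * (z1 + z2)) = (r0 + r1*z1 + r2*z1^+2) - (r0 + r1*z2 + r2*z2^+2) by ring.
  by rewrite R1 R2 subrr.
have e13 : (z1 - z3) * (r1 + r2 * (z1 + z3)) = 0.
  have -> : (z1 - z3) * (r1 + r2 * (z1 + z3)) = (r0 + r1*z1 + r2*z1^+2) - (r0 + r1*z3 + r2*z3^+2) by ring.
  by rewrite R1 R3 subrr.
move/eqP: e12; rewrite mulf_eq0 subr_eq0 (negbTE h12) /= => /eqP e12.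
move/eqP: e13; rewrite mulf_eq0 subr_eq0 (negbTE h13) /= => /eqP e13.
have : r2 * (z2 - z3) = 0.
  have -> : r2 * (z2 - z3) = (r1 + r2 * (z1 + z2)) - (r1 + r2 * (z1 + z3)) by ring.
  by rewrite e12 e13 subrr.
move/eqP; rewrite mulf_eq0 subr_eq0 (negbTE h23) orbF => /eqP hr2.
have hr1 : r1 = 0 by move: e12; rewrite hr2 mul0r addr0.
split=> //; move: R1; rewrite hr1 hr2 !mul0r !addr0 //.
Qed.

Lemma natK_inj : injective (fun i : nat => (i%:R : K)).
Proof.
have h0 := (pcharf0P K).1 charK.
move=> i j /= eij; apply/eqP; case: (ltngtP i j) => // hij; exfalso.
- have : ((j - i)%:R : K) == 0 by rewrite natrB ?(ltnW hij) // eij subrr.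
  by rewrite h0 subn_eq0 leqNgt hij.
- have : ((i - j)%:R : K) == 0 by rewrite natrB ?(ltnW hij) // eij subrr.
  by rewrite h0 subn_eq0 leqNgt hij.
Qed.

Lemma natK_neq0 n : (n.+1%:R : K) != 0.
Proof. by rewrite ((pcharf0P K).1 charK). Qed.

Lemma poly_vanish (q : {poly K}) : (forall x, q.[x] = 0) -> q = 0.
Proof.
move=> hq; apply/eqP; apply: contraT => nz.
have := max_poly_roots nz (rs := mkseq (fun i => i%:R) (size q)).
rewrite size_mkseq ltnn; apply.
  by apply/allP => x _; rewrite /root hq.
exact: mkseq_uniq natK_inj.
Qed.

Lemma horner_mmap n (L : 'I_n -> {poly K}) (R : {mpoly K[n]}) (l : K) :
  (mmap (@polyC K) L R).[l] = R.@[fun i => (L i).[l]].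
Proof.
rewrite /mmap mevalE horner_sum; apply: eq_bigr => m _.
rewrite hornerM hornerC /mmap1 horner_prod; congr (_ * _).
by apply: eq_bigr => i _; rewrite horner_exp.
Qed.

Lemma line_trick (R G : {mpoly K[2]}) (w1 : 'I_2 -> K) :
  G.@[w1] != 0 -> (forall w, G.@[w] != 0 -> R.@[w] = 0) -> forall w, R.@[w] = 0.
Proof.
move=> hG hR w0.
pose L := fun i : 'I_2 => (w0 i)%:P + (w1 i - w0 i)%:P * 'X.
have hL l i : (L i).[l] = w0 i + (w1 i - w0 i) * l by rewrite /L !hornerE.
pose r := mmap (@polyC K) L R; pose g := mmap (@polyC K) L G.
have gnz : g != 0.
  apply: contra hG => /eqP g0; apply/eqP.
  have -> : G.@[w1] = G.@[fun i => (L i).[1]].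
    by apply: meval_eq => i; rewrite hL mulr1 addrC subrK.
  by rewrite -horner_mmap -/g g0 horner0.
have : r * g = 0.
  apply: poly_vanish => l; rewrite hornerM.
  have [->|gl] := eqVneq g.[l] 0; first by rewrite mulr0.
  rewrite horner_mmap hR ?mul0r //.
  by move: gl; rewrite horner_mmap.
move/eqP; rewrite mulf_eq0 (negbTE gnz) orbF => /eqP r0.
have -> : R.@[w0] = R.@[fun i => (L i).[0]].
  by apply: meval_eq => i; rewrite hL mulr0 addr0.
by rewrite -horner_mmap -/r r0 horner0.
Qed.

Definition DiscF (R : comRingType) (l b2 b1 b0 : R) :=
  b2^+2* b1^+2 - 4* b1^+3* l - 4* b2^+3* b0 - 27* b0^+2* l^+2 + 18* b2* b1* b0* l.

Lemma DiscF_morph (R S : comNzRingType) (f : {rmorphism R -> S}) l b2 b1 b0 :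
  f (DiscF l b2 b1 b0) = DiscF (f l) (f b2) (f b1) (f b0).
Proof. by rewrite /DiscF !(rmorph_nat, rmorphN, rmorphB, rmorphD, rmorphM, rmorphXn). Qed.

Definition ev2 (P : {poly {mpoly K[2]}}) (w : 'I_2 -> K) (c : K) :=
  (map_poly (meval w) P).[c].

Lemma ev2_coef n (P : {poly {mpoly K[2]}}) (w : 'I_2 -> K) (c : K) : (size P <= n)%N ->
  ev2 P w c = \sum_(i < n) (P`_i).@[w] * c^+i.
Proof.
move=> hP; rewrite /ev2 (@horner_coef_wide _ n).
  by apply: eq_bigr => i _; rewrite coef_map.
by rewrite map_polyE; apply: leq_trans (size_Poly _) _; rewrite size_map.
Qed.

Lemma ev2D (P Q : {poly {mpoly K[2]}}) w c : ev2 (P + Q) w c = ev2 P w c + ev2 Q w c.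
Proof. by rewrite /ev2 rmorphD hornerD. Qed.
Lemma ev2M (P Q : {poly {mpoly K[2]}}) w c : ev2 (P * Q) w c = ev2 P w c * ev2 Q w c.
Proof. by rewrite /ev2 rmorphM hornerM. Qed.
Lemma ev2Z a (P : {poly {mpoly K[2]}}) w c : ev2 (a *: P) w c = a.@[w] * ev2 P w c.
Proof. by rewrite -mul_polyC ev2M /ev2 map_polyC hornerC. Qed.

Lemma dens_poly (l b0 b1 b2 H : {mpoly K[2]}) (w1 : 'I_2 -> K) (P : {poly {mpoly K[2]}}) :
  (l * DiscF l b2 b1 b0 * H).@[w1] != 0 ->
  (forall w c, (l * DiscF l b2 b1 b0 * H).@[w] != 0 ->
     l.@[w]*c^+3 + b2.@[w]*c^+2 + b1.@[w]*c + b0.@[w] = 0 -> ev2 P w c = 0) ->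
  forall w c, l.@[w] != 0 ->
     l.@[w]*c^+3 + b2.@[w]*c^+2 + b1.@[w]*c + b0.@[w] = 0 -> ev2 P w c = 0.
Proof.
set G := l * _ * H => hG1 hP.
have lnz : l != 0 by apply: contra hG1 => /eqP l0; rewrite /G l0 !mul0r meval0.
pose Fp := Poly [:: b0; b1; b2; l].
have hFp : Fp = [:: b0; b1; b2; l] :> seq _ by rewrite (@PolyK _ 1).
have Fnz : Fp != 0 by rewrite -size_poly_eq0 hFp.
have lcF : lead_coef Fp = l by rewrite lead_coefE hFp.
have evF w c : ev2 Fp w c = l.@[w]*c^+3 + b2.@[w]*c^+2 + b1.@[w]*c + b0.@[w].
  rewrite (@ev2_coef 4); last by rewrite hFp.
  rewrite !big_ord_recr big_ord0 /= /Fp !coef_Poly /=.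
  by rewrite add0r expr0 mulr1 expr1; ring.
have hdiv := Pdiv.Idomain.divp_eq P Fp.
rewrite lcF in hdiv.
set k := scalp _ _ in hdiv; set Q := _ %/ _ in hdiv; set Rm := _ %% _ in hdiv.
have sRm : (size Rm <= 3)%N.
  have hsF : size Fp = 4%N by rewrite hFp.
  by have := ltn_modp P Fp; rewrite Fnz -/Rm hsF.
have evR w c : ev2 Rm w c = (Rm`_0).@[w] + (Rm`_1).@[w] * c + (Rm`_2).@[w] * c^+2.
  rewrite (ev2_coef _ _ sRm) !big_ord_recr big_ord0 /=.
  by rewrite add0r expr0 mulr1 expr1.
have key w c : ev2 (l ^+ k *: P) w c = ev2 Q w c * ev2 Fp w c + ev2 Rm w c.
  by rewrite hdiv ev2D ev2M.
have Rgood w : G.@[w] != 0 -> [/\ (Rm`_0).@[w] = 0, (Rm`_1).@[w] = 0 & (Rm`_2).@[w] = 0].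
  move=> hGw.
  have lw : l.@[w] != 0 by move: hGw; rewrite /G !mevalM !mulf_eq0 !negb_or => /andP[/andP[]].
  have Dw : (DiscF l b2 b1 b0).@[w] != 0.
    by move: hGw; rewrite /G !mevalM !mulf_eq0 !negb_or => /andP[/andP[]].
  apply: (@cubic_sep (b2.@[w] / l.@[w]) (b1.@[w] / l.@[w]) (b0.@[w] / l.@[w])).
    move: Dw; rewrite DiscF_morph /DiscF; apply: contra => /eqP h.
    have -> : b2.@[w] ^+ 2 * b1.@[w] ^+ 2 - 4 * b1.@[w] ^+ 3 * l.@[w] -
        4 * b2.@[w] ^+ 3 * b0.@[w] - 27 * b0.@[w] ^+ 2 * l.@[w] ^+ 2 +
        18 * b2.@[w] * b1.@[w] * b0.@[w] * l.@[w] =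
      l.@[w]^+4 * (18 * (b2.@[w] / l.@[w]) * (b1.@[w] / l.@[w]) * (b0.@[w] / l.@[w]) -
       4 * (b2.@[w] / l.@[w]) ^+ 3 * (b0.@[w] / l.@[w]) +
       (b2.@[w] / l.@[w]) ^+ 2 * (b1.@[w] / l.@[w]) ^+ 2 - 4 * (b1.@[w] / l.@[w]) ^+ 3 -
       27 * (b0.@[w] / l.@[w]) ^+ 2) by field.
    by rewrite h mulr0.
  move=> c hc.
  have hF : ev2 Fp w c = 0.
    rewrite evF; have -> : l.@[w]*c^+3 + b2.@[w]*c^+2 + b1.@[w]*c + b0.@[w] =
      l.@[w] * (c ^+ 3 + b2.@[w] / l.@[w] * c ^+ 2 + b1.@[w] / l.@[w] * c + b0.@[w] / l.@[w])
      by field.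
    by rewrite hc mulr0.
  have hPw : ev2 P w c = 0 by apply: hP => //; rewrite -evF.
  have := key w c; rewrite ev2Z hPw hF !mulr0 add0r evR => <-.
  by [].
have R0 i : (i < 3)%N -> forall w, (Rm`_i).@[w] = 0.
  move=> hi; apply: (line_trick hG1) => w /Rgood [h0 h1 h2].
  by move: hi; case: i => [|[|[|]]].
move=> w c lw hFw.
have := key w c; rewrite ev2Z evR !R0 // evF hFw mulr0 !mul0r !addr0 => /eqP.
by rewrite mulf_eq0 rmorphXn expf_eq0 (negbTE lw) andbF /= => /eqP.
Qed.

Lemma ev2_eq (P : {poly {mpoly K[2]}}) (w1 w2 : 'I_2 -> K) c :
  w1 =1 w2 -> ev2 P w1 c = ev2 P w2 c.
Proof. by move=> hw; rewrite /ev2; congr (_.[c]); apply: eq_map_poly => a; exact: meval_eq. Qed.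

Lemma mevalXn n (v : 'I_n -> K) (p : {mpoly K[n]}) k : (p ^+ k).@[v] = (p.@[v]) ^+ k.
Proof. exact: rmorphXn. Qed.

Definition w3 (x : pt K 3) : 'I_2 -> K := fun i => if val i == 0%N then x c0 else x c1.
Definition ev3 (P : {poly {mpoly K[2]}}) (x : pt K 3) := ev2 P (w3 x) (x c2).
Definition mono : {mpoly K[2]} := 'X_c0 * 'X_c1.
Lemma mono_ev x : mono.@[w3 x] = x c0 * x c1.
Proof. by rewrite /mono mevalM !mevalXU. Qed.

Definition rep (phi : pt K 3 -> K) := exists (P : {poly {mpoly K[2]}}) (N : nat),
  forall x, x c0 != 0 -> x c1 != 0 -> (x c0 * x c1)^+N * phi x = ev3 P x.

Lemma ev3C a x : ev3 ((a%:MP)%:P) x = a.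
Proof. by rewrite /ev3 /ev2 map_polyC hornerC; exact: mevalC. Qed.
Lemma ev3D P Q x : ev3 (P + Q) x = ev3 P x + ev3 Q x. Proof. exact: ev2D. Qed.
Lemma ev3M P Q x : ev3 (P * Q) x = ev3 P x * ev3 Q x. Proof. exact: ev2M. Qed.
Lemma ev3N P x : ev3 (- P) x = - ev3 P x.
Proof. by rewrite /ev3 /ev2 rmorphN hornerN. Qed.
Lemma ev3polyC a x : ev3 (a%:P) x = a.@[w3 x].
Proof. by rewrite /ev3 /ev2 map_polyC hornerC. Qed.

Lemma repC a : rep (fun _ => a).
Proof. by exists ((a%:MP)%:P), 0%N => x _ _; rewrite expr0 mul1r ev3C. Qed.
Lemma rep_s : rep (fun x => x c0).
Proof. by exists (('X_c0)%:P), 0%N => x _ _; rewrite expr0 mul1r ev3polyC mevalXU. Qed.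
Lemma rep_u : rep (fun x => x c1).
Proof. by exists (('X_c1)%:P), 0%N => x _ _; rewrite expr0 mul1r ev3polyC mevalXU. Qed.
Lemma rep_c : rep (fun x => x c2).
Proof. by exists 'X, 0%N => x _ _; rewrite expr0 mul1r /ev3 /ev2 map_polyX hornerX. Qed.
Lemma rep_si : rep (fun x => (x c0)^-1).
Proof.
exists (('X_c1)%:P), 1%N => x hs hu; rewrite ev3polyC mevalXU /=.
by rewrite expr1 mulrAC mulfV // mul1r.
Qed.
Lemma rep_ui : rep (fun x => (x c1)^-1).
Proof.
exists (('X_c0)%:P), 1%N => x hs hu; rewrite ev3polyC mevalXU /=.
by rewrite expr1 -mulrA mulfV // mulr1.
Qed.
Lemma repD f g : rep f -> rep g -> rep (fun x => f x + g x).
Proof.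
move=> [P [N hP]] [Q [M hQ]].
exists ((mono^+M)%:P * P + (mono^+N)%:P * Q), (N + M)%N => x hs hu.
rewrite ev3D !ev3M !ev3polyC !mevalXn mono_ev -hP // -hQ //.
by rewrite exprD; ring.
Qed.
Lemma repM f g : rep f -> rep g -> rep (fun x => f x * g x).
Proof.
move=> [P [N hP]] [Q [M hQ]].
exists (P * Q), (N + M)%N => x hs hu.
by rewrite ev3M -hP // -hQ // exprD; ring.
Qed.
Lemma repN f : rep f -> rep (fun x => - f x).
Proof.
move=> [P [N hP]]; exists (- P), N => x hs hu.
by rewrite ev3N -hP // mulrN.
Qed.
Lemma repB f g : rep f -> rep g -> rep (fun x => f x - g x).
Proof. by move=> hf hg; apply: repD hf (repN hg). Qed.
Lemma rep_ext f g : f =1 g -> rep f -> rep g.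
Proof. by move=> fg [P [N hP]]; exists P, N => x hs hu; rewrite -fg hP. Qed.
Lemma repX f k : rep f -> rep (fun x => f x ^+ k).
Proof.
move=> hf; elim: k => [|k ih].
  by apply: rep_ext (repC 1) => x; rewrite expr0.
by apply: rep_ext (repM hf ih) => x; rewrite exprS.
Qed.
Lemma rep_sum (I : Type) (r : seq I) (F : I -> pt K 3 -> K) :
  (forall i, rep (F i)) -> rep (fun x => \sum_(i <- r) F i x).
Proof.
move=> hF; elim: r => [|i r ih].
  by apply: rep_ext (repC 0) => x; rewrite big_nil.
by apply: rep_ext (repD (hF i) ih) => x; rewrite big_cons.
Qed.
Lemma rep_prod (I : Type) (r : seq I) (F : I -> pt K 3 -> K) :
  (forall i, rep (F i)) -> rep (fun x => \prod_(i <- r) F i x).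
Proof.
move=> hF; elim: r => [|i r ih].
  by apply: rep_ext (repC 1) => x; rewrite big_nil.
by apply: rep_ext (repM (hF i) ih) => x; rewrite big_cons.
Qed.
Lemma rep_meval n (p : {mpoly K[n]}) (f : 'I_n -> pt K 3 -> K) :
  (forall i, rep (f i)) -> rep (fun x => p.@[fun i => f i x]).
Proof.
move=> hf.
have h := @rep_sum _ (msupp p) (fun (m : 'X_{1..n}) x => p@_m * \prod_i f i x ^+ m i).
apply: (rep_ext _ (h _)).
  by move=> x; rewrite mevalE.
move=> m; apply: repM (repC _) _.
by apply: rep_prod => i; apply: repX.
Qed.


Lemma dens_rep (l b0 b1 b2 H : {mpoly K[2]}) (w1 : 'I_2 -> K) (phi : pt K 3 -> K) :
  (l * DiscF l b2 b1 b0 * (mono * H)).@[w1] != 0 -> rep phi ->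
  (forall x, (l * DiscF l b2 b1 b0 * (mono * H)).@[w3 x] != 0 ->
     l.@[w3 x] * x c2^+3 + b2.@[w3 x] * x c2^+2 + b1.@[w3 x] * x c2 + b0.@[w3 x] = 0 ->
     phi x = 0) ->
  forall x, x c0 != 0 -> x c1 != 0 -> l.@[w3 x] != 0 ->
     l.@[w3 x] * x c2^+3 + b2.@[w3 x] * x c2^+2 + b1.@[w3 x] * x c2 + b0.@[w3 x] = 0 ->
     phi x = 0.
Proof.
move=> hG [P [N hP]] hphi x hs hu hl hF.
have : ev3 P x = 0.
  apply: (dens_poly hG) => // w c hGw hFw.
  pose y : pt K 3 := fun i => match val i with 0%N => w c0 | 1%N => w c1 | _ => c end.
  have wy : w3 y =1 w.
    by case=> [[|[|m]] hm] //=; congr w; apply: val_inj.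
  have hmono : mono.@[w] != 0.
    by move: hGw; rewrite !mevalM !mulf_eq0 !negb_or => /andP[/andP[_ _] /andP[hm _]].
  have ys : y c0 != 0 /\ y c1 != 0.
    by move: hmono; rewrite /mono mevalM !mevalXU mulf_eq0 negb_or => /andP[h0 h1]; split.
  case: ys => ys0 ys1.
  rewrite -(ev2_eq P c wy) -[c]/(y c2) -/(ev3 P y) -hP // (hphi y) ?mulr0 //.
    by rewrite (meval_eq _ wy).
  by rewrite !(meval_eq _ wy).
rewrite -hP // => /eqP; rewrite mulf_eq0 expf_eq0 mulf_eq0 (negbTE hs) (negbTE hu) andbF /=.
by move/eqP.
Qed.

End Gen.

Ltac morph := rewrite ?(rmorph_nat, rmorph1, rmorphN, rmorphB, rmorphD, rmorphM, rmorphXn).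

Section SLdefs.
Variable R : comNzRingType.
Implicit Types s u c t v : R.
Definition lS s u := s^+2 * u^+2.
Definition b0S s u := s*u*(s^+2 - 1)*(u^+2 - 1).
Definition b1S s u := 1 - s^+2 - u^+2 + 4*s^+2*u^+2 - s^+4*u^+2 - s^+2*u^+4 + s^+4*u^+4.
Definition b2S s u := 2*s*u - s^+3*u - s*u^+3 + 2*s^+3*u^+3.
Definition HS s u := s^+2 - u^+2.
Definition GS s u := lS s u * DiscF (lS s u) (b2S s u) (b1S s u) (b0S s u) * (s * u * HS s u).
Definition TnS s u c := s*u - s*u^+3 + s^+3*u^+3 + c*(2*s^+2*u^+2 + 1 - u^+2) + c^+2*s*u.
Definition cnS s t u v := s*u*(t*s^+2 - v*u^+2 - s^+2 + u^+2).
Definition TnH s u cn cd := s*u*cd^+2 - s*u^+3*cd^+2 + s^+3*u^+3*cd^+2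
   + cn*cd*(2*s^+2*u^+2 + 1 - u^+2) + cn^+2*s*u.
Definition P1S s t u v := TnH s u (cnS s t u v) (HS s u) - s^+3*u*(HS s u)^+2*t.
Definition P2S s t u v := TnH u s (cnS s t u v) (HS s u) - u^+3*s*(HS s u)^+2*v.
Definition P3S s t u v := lS s u * (cnS s t u v)^+3 + b2S s u * (cnS s t u v)^+2 * HS s u
   + b1S s u * cnS s t u v * (HS s u)^+2 + b0S s u * (HS s u)^+3.
End SLdefs.

Section Morph.
Variables (R S : comNzRingType) (f : {rmorphism R -> S}).
Lemma lS_m s u : f (lS s u) = lS (f s) (f u). Proof. by rewrite /lS; morph. Qed.
Lemma b0S_m s u : f (b0S s u) = b0S (f s) (f u). Proof. by rewrite /b0S; morph. Qed.
Lemma b1S_m s u : f (b1S s u) = b1S (f s) (f u). Proof. by rewrite /b1S; morph. Qed.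
Lemma b2S_m s u : f (b2S s u) = b2S (f s) (f u). Proof. by rewrite /b2S; morph. Qed.
Lemma HS_m s u : f (HS s u) = HS (f s) (f u). Proof. by rewrite /HS; morph. Qed.
Lemma GS_m s u : f (GS s u) = GS (f s) (f u).
Proof. by rewrite /GS rmorphM rmorphM DiscF_morph !lS_m !b0S_m !b1S_m !b2S_m rmorphM rmorphM HS_m. Qed.
Lemma TnS_m s u c : f (TnS s u c) = TnS (f s) (f u) (f c). Proof. by rewrite /TnS; morph. Qed.
Lemma cnS_m s t u v : f (cnS s t u v) = cnS (f s) (f t) (f u) (f v). Proof. by rewrite /cnS; morph. Qed.
Lemma TnH_m s u a b : f (TnH s u a b) = TnH (f s) (f u) (f a) (f b). Proof. by rewrite /TnH; morph. Qed.
Lemma P1S_m s t u v : f (P1S s t u v) = P1S (f s) (f t) (f u) (f v).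
Proof. by rewrite /P1S; morph; rewrite ?TnH_m ?cnS_m ?HS_m. Qed.
Lemma P2S_m s t u v : f (P2S s t u v) = P2S (f s) (f t) (f u) (f v).
Proof. by rewrite /P2S; morph; rewrite ?TnH_m ?cnS_m ?HS_m. Qed.
Lemma P3S_m s t u v : f (P3S s t u v) = P3S (f s) (f t) (f u) (f v).
Proof. by rewrite /P3S !(lS_m, b0S_m, b1S_m, b2S_m, cnS_m, HS_m, rmorph_nat, rmorph1, rmorphN, rmorphB, rmorphD, rmorphM, rmorphXn). Qed.
End Morph.

Section SLfield.
Variable K : fieldType.
Variables s u : K.
Hypotheses (hs : s != 0) (hu : u != 0).

Lemma C_F c : lS s u * c^+3 + b2S s u * c^+2 + b1S s u * c + b0S s u = s^+2*u^+2 * C_eq s u c.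
Proof. rewrite /lS /b2S /b1S /b0S /C_eq; field. by rewrite hs hu. Qed.

Lemma et_ne0 c : C_eq s u c = 0 -> e_t s u c != 0.
Proof.
move=> hC; apply/eqP => ht.
have : e_t s u c * ((u ^- 2 - s^+2 * u ^- 2 + s^+2) + (2*s*u^-1 - s^+3*u^-1 + s^+3*u)*c
   + s^+2*c^+2) = 1 + ((s^-1*u^-1 + s*u) + c) * C_eq s u c.
  by rewrite /e_t /C_eq; field; rewrite hs hu.
by rewrite ht hC mul0r mulr0 addr0 => /eqP; rewrite eq_sym oner_eq0.
Qed.

Lemma cn_id c : cnS s (e_t s u c) u (e_v s u c) = c * HS s u.
Proof. by rewrite /cnS /e_t /e_v /HS; field; rewrite hs hu. Qed.
Lemma P1_id c : P1S s (e_t s u c) u (e_v s u c) = 0.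
Proof. by rewrite /P1S /TnH /cnS /e_t /e_v /HS; field; rewrite hs hu. Qed.
Lemma P2_id c : P2S s (e_t s u c) u (e_v s u c) = 0.
Proof. by rewrite /P2S /TnH /cnS /e_t /e_v /HS; field; rewrite hs hu. Qed.
Lemma P3_id c : P3S s (e_t s u c) u (e_v s u c) = (HS s u)^+3 * (s^+2*u^+2*C_eq s u c).
Proof. by rewrite /P3S /lS /b0S /b1S /b2S /cnS /e_t /e_v /HS /C_eq; field; rewrite hs hu. Qed.

Hypothesis hH : HS s u != 0.
Let hH' : s^+2 - u^+2 != 0. Proof. exact: hH. Qed.

Lemma P1_back t v : P1S s t u v = 0 -> e_t s u (cnS s t u v / HS s u) = t.
Proof.
have -> : P1S s t u v = s^+3*u*(HS s u)^+2 * (e_t s u (cnS s t u v / HS s u) - t).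
  by rewrite /P1S /TnH /cnS /e_t /HS; field; rewrite hs hu hH'.
move/eqP; rewrite !mulf_eq0 ?expf_eq0 /= (negbTE hs) (negbTE hu) (negbTE hH) /=.
by rewrite subr_eq0 => /eqP.
Qed.
Lemma P2_back t v : P2S s t u v = 0 -> e_v s u (cnS s t u v / HS s u) = v.
Proof.
have -> : P2S s t u v = u^+3*s*(HS s u)^+2 * (e_v s u (cnS s t u v / HS s u) - v).
  by rewrite /P2S /TnH /cnS /e_v /HS; field; rewrite hs hu hH'.
move/eqP; rewrite !mulf_eq0 ?expf_eq0 /= (negbTE hs) (negbTE hu) (negbTE hH) /=.
by rewrite subr_eq0 => /eqP.
Qed.
Lemma P3_back t v : P3S s t u v = 0 -> C_eq s u (cnS s t u v / HS s u) = 0.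
Proof.
have -> : P3S s t u v = (HS s u)^+3 * (s^+2*u^+2 * C_eq s u (cnS s t u v / HS s u)).
  by rewrite /P3S /lS /b0S /b1S /b2S /cnS /C_eq /HS; field; rewrite hs hu hH'.
move/eqP; rewrite !mulf_eq0 ?expf_eq0 /= (negbTE hs) (negbTE hu) (negbTE hH) /=.
by move/eqP.
Qed.
Lemma cn_back c : cnS s (e_t s u c) u (e_v s u c) / HS s u = c.
Proof. by rewrite cn_id mulfK. Qed.
End SLfield.

Lemma Tn_t (K : fieldType) (s u c : K) : s != 0 -> u != 0 -> TnS s u c / (s^+3*u) = e_t s u c.
Proof. by move=> hs hu; rewrite /TnS /e_t; field; rewrite hs hu. Qed.
Lemma Tn_v (K : fieldType) (s u c : K) : s != 0 -> u != 0 -> TnS u s c / (u^+3*s) = e_v s u c.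
Proof. by move=> hs hu; rewrite /TnS /e_v; field; rewrite hs hu. Qed.
Lemma C_sym (K : fieldType) (s u c : K) : C_eq s u c = C_eq u s c.
Proof. by rewrite /C_eq; ring. Qed.

Section Evals.
Variables (K : fieldType) (n : nat) (v : 'I_n -> K).
Lemma lS_ev i j : (lS 'X_i 'X_j).@[v] = lS (v i) (v j). Proof. by rewrite lS_m /= !mevalXU. Qed.
Lemma b0S_ev i j : (b0S 'X_i 'X_j).@[v] = b0S (v i) (v j). Proof. by rewrite b0S_m /= !mevalXU. Qed.
Lemma b1S_ev i j : (b1S 'X_i 'X_j).@[v] = b1S (v i) (v j). Proof. by rewrite b1S_m /= !mevalXU. Qed.
Lemma b2S_ev i j : (b2S 'X_i 'X_j).@[v] = b2S (v i) (v j). Proof. by rewrite b2S_m /= !mevalXU. Qed.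
Lemma HS_ev i j : (HS 'X_i 'X_j).@[v] = HS (v i) (v j). Proof. by rewrite HS_m /= !mevalXU. Qed.
Lemma GS_ev i j : (GS 'X_i 'X_j).@[v] = GS (v i) (v j). Proof. by rewrite GS_m /= !mevalXU. Qed.
Lemma TnS_ev i j k : (TnS 'X_i 'X_j 'X_k).@[v] = TnS (v i) (v j) (v k).
Proof. by rewrite TnS_m /= !mevalXU. Qed.
Lemma cnS_ev i j k l : (cnS 'X_i 'X_j 'X_k 'X_l).@[v] = cnS (v i) (v j) (v k) (v l).
Proof. by rewrite cnS_m /= !mevalXU. Qed.
Lemma P1S_ev i j k l : (P1S 'X_i 'X_j 'X_k 'X_l).@[v] = P1S (v i) (v j) (v k) (v l).
Proof. by rewrite P1S_m /= !mevalXU. Qed.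
Lemma P2S_ev i j k l : (P2S 'X_i 'X_j 'X_k 'X_l).@[v] = P2S (v i) (v j) (v k) (v l).
Proof. by rewrite P2S_m /= !mevalXU. Qed.
Lemma P3S_ev i j k l : (P3S 'X_i 'X_j 'X_k 'X_l).@[v] = P3S (v i) (v j) (v k) (v l).
Proof. by rewrite P3S_m /= !mevalXU. Qed.
End Evals.

Section SLmain.
Variable K : closedFieldType.
Hypothesis charK : [pchar K] =i pred0.

Lemma GS23 : GS (2 : K) 3 != 0.
Proof.
have -> : GS (2 : K) 3 = 2^+12 * 3^+7 * 5 * 3079%:R.
  by rewrite /GS /lS /DiscF /b0S /b1S /b2S /HS; ring.
by rewrite !mulf_neq0 ?expf_neq0 // (natK_neq0 charK).
Qed.
End SLmain.

Section SLmain2.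
Variable K : closedFieldType.
Hypothesis charK : [pchar K] =i pred0.

Definition G3 : {mpoly K[3]} := GS 'X_c0 'X_c1.
Definition G4 : {mpoly K[4]} := GS 'X_c0 'X_c2.
Definition USL (x : pt K 3) := frakC x /\ G3.@[x] != 0.
Definition VSL (y : pt K 4) := frakE0 y /\ G4.@[y] != 0.

Definition faS (i : 'I_4) : {mpoly K[3]} :=
  match val i with 0%N => 'X_c0 | 1%N => TnS 'X_c0 'X_c1 'X_c2 | 2%N => 'X_c1
  | _ => TnS 'X_c1 'X_c0 'X_c2 end.
Definition fbS (i : 'I_4) : {mpoly K[3]} :=
  match val i with 1%N => 'X_c0^+3 * 'X_c1 | 3%N => 'X_c1^+3 * 'X_c0 | _ => 1 end.
Definition gaS (i : 'I_3) : {mpoly K[4]} :=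
  match val i with 0%N => 'X_c0 | 1%N => 'X_c2 | _ => cnS 'X_c0 'X_c1 'X_c2 'X_c3 end.
Definition gbS (i : 'I_3) : {mpoly K[4]} :=
  match val i with 2%N => HS 'X_c0 'X_c2 | _ => 1 end.

Definition Gpt (y : pt K 4) : pt K 3 := fun i =>
  match val i with 0%N => y c0 | 1%N => y c2
  | _ => cnS (y c0) (y c1) (y c2) (y c3) / HS (y c0) (y c2) end.

Lemma Feval x : x c0 != 0 -> x c1 != 0 ->
  rat_defined fbS x /\ forall i, rat_eval faS fbS x i = emap x i.
Proof.
move=> hs hu; split.
  case=> [[|[|[|[|m]]]] hi] //=; rewrite /fbS /= ?meval1 ?oner_neq0 //.
    by rewrite mevalM mevalXn !mevalXU mulf_neq0 ?expf_neq0.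
  by rewrite mevalM mevalXn !mevalXU mulf_neq0 ?expf_neq0.
case=> [[|[|[|[|m]]]] hi] //=; rewrite /rat_eval /faS /fbS /emap /=.
- by rewrite mevalXU meval1 divr1.
- by rewrite TnS_ev mevalM mevalXn !mevalXU Tn_t.
- by rewrite mevalXU meval1 divr1.
- by rewrite TnS_ev mevalM mevalXn !mevalXU Tn_v.
Qed.

Lemma Geval y : y c0 != 0 -> y c2 != 0 -> HS (y c0) (y c2) != 0 ->
  rat_defined gbS y /\ forall i, rat_eval gaS gbS y i = Gpt y i.
Proof.
move=> hs hu hH; split.
  by case=> [[|[|[|m]]] hi] //=; rewrite /gbS /= ?meval1 ?oner_neq0 // HS_ev.
case=> [[|[|[|m]]] hi] //=; rewrite /rat_eval /gaS /gbS /Gpt /=.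
- by rewrite mevalXU meval1 divr1.
- by rewrite mevalXU meval1 divr1.
- by rewrite cnS_ev HS_ev.
Qed.


Lemma GS_nz (s u : K) : GS s u != 0 -> [/\ s != 0, u != 0 & HS s u != 0].
Proof.
by rewrite /GS !mulf_eq0 !negb_or => /andP[_ /andP[/andP[-> ->] ->]].
Qed.

Lemma U_facts x : USL x ->
  [/\ x c0 != 0, x c1 != 0, HS (x c0) (x c1) != 0 & C_eq (x c0) (x c1) (x c2) = 0].
Proof.
by case=> [[hs [hu hC]]]; rewrite /G3 GS_ev => /GS_nz [_ _ hH].
Qed.

Lemma E0_vanish y (p : {mpoly K[4]}) : frakE0 y ->
  (forall x, frakC x -> p.@[emap x] = 0) -> p.@[y] = 0.
Proof.
case=> _ hcl hp; apply: hcl => z [x [hx hz]].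
by rewrite (meval_eq _ hz); apply: hp.
Qed.

Lemma F_into_V x : USL x -> VSL (rat_eval faS fbS x).
Proof.
move=> hU; have [hs hu hH hC] := U_facts hU.
have [_ hF] := Feval hs hu.
split; last by rewrite /G4 GS_ev !hF /=; case: hU; rewrite /G3 GS_ev.
split.
  case=> [[|[|[|[|m]]]] hi] //; rewrite hF /emap /=.
  - exact: hs.
  - exact: et_ne0.
  - exact: hu.
  - by rewrite /e_v -/(e_t (x c1) (x c0) (x c2)); apply: et_ne0; rewrite // -C_sym.
move=> p hp; apply: hp; exists x; split => //; by case: hU.
Qed.

Lemma V_facts y : VSL y ->
  [/\ y c0 != 0, y c2 != 0, HS (y c0) (y c2) != 0 & frakE0 y].
Proof.
case=> hE; rewrite /G4 GS_ev => /GS_nz [hs hu hH]; split => //.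
Qed.

Lemma G_into_U y : VSL y -> USL (rat_eval gaS gbS y).
Proof.
move=> hV; have [hs hu hH hE] := V_facts hV.
have [_ hG] := Geval hs hu hH.
split; last by rewrite /G3 GS_ev !hG /Gpt /=; case: hV; rewrite /G4 GS_ev.
rewrite /frakC !hG /Gpt /=; split => //; split => //.
apply: P3_back => //.
have := E0_vanish (p := P3S 'X_c0 'X_c1 'X_c2 'X_c3) hE.
rewrite P3S_ev; apply => x [hx0 [hx1 hC]].
by rewrite P3S_ev /emap /= P3_id // hC !mulr0.
Qed.

Lemma GF x : USL x -> forall i, rat_eval gaS gbS (rat_eval faS fbS x) i = x i.
Proof.
move=> hU; have [hs hu hH hC] := U_facts hU.
have [_ hF] := Feval hs hu.
have [hs' hu' hH' _] := V_facts (F_into_V hU).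
have [_ hG] := Geval hs' hu' hH'.
case=> [[|[|[|m]]] hi] //; rewrite hG /Gpt !hF /emap /=.
- by congr x; apply: val_inj.
- by congr x; apply: val_inj.
- by rewrite cn_back //; congr x; apply: val_inj.
Qed.

Lemma FG y : VSL y -> forall j, rat_eval faS fbS (rat_eval gaS gbS y) j = y j.
Proof.
move=> hV; have [hs hu hH hE] := V_facts hV.
have [_ hG] := Geval hs hu hH.
have [hs' hu' _ _] := U_facts (G_into_U hV).
have [_ hF] := Feval hs' hu'.
case=> [[|[|[|[|m]]]] hi] //; rewrite hF /emap !hG /Gpt /=.
- by congr y; apply: val_inj.
- rewrite P1_back //; first by congr y; apply: val_inj.
  have := E0_vanish (p := P1S 'X_c0 'X_c1 'X_c2 'X_c3) hE.
  rewrite P1S_ev; apply => x [hx0 [hx1 hC]].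
  by rewrite P1S_ev /emap /= P1_id.
- by congr y; apply: val_inj.
- rewrite P2_back //; first by congr y; apply: val_inj.
  have := E0_vanish (p := P2S 'X_c0 'X_c1 'X_c2 'X_c3) hE.
  rewrite P2S_ev; apply => x [hx0 [hx1 hC]].
  by rewrite P2S_ev /emap /= P2_id.
Qed.
End SLmain2.

Section SLdens.
Variable K : closedFieldType.
Hypothesis charK : [pchar K] =i pred0.

Ltac rep_tac := repeat first
  [ apply: repD | apply: repN | apply: repX | apply: repM
  | exact: rep_s | exact: rep_u | exact: rep_c | exact: rep_si | exact: rep_ui | exact: repC ].

Lemma rep_coord (i : 'I_3) : rep (fun x : pt K 3 => x i).
Proof.
case: i => [[|[|[|m]]] hi] //.
- by rewrite (_ : Ordinal hi = c0); [exact: rep_s | exact: val_inj].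
- by rewrite (_ : Ordinal hi = c1); [exact: rep_u | exact: val_inj].
- by rewrite (_ : Ordinal hi = c2); [exact: rep_c | exact: val_inj].
Qed.

Lemma rep_et : rep (fun x : pt K 3 => e_t (x c0) (x c1) (x c2)).
Proof.
apply: (@rep_ext _ (fun x => (x c0)^-1^+2 - (x c0)^-1^+2 * (x c1)^+2 + (x c1)^+2
  + x c2 * (2 * (x c0)^-1 * x c1 + (x c0)^-1^+3 * (x c1)^-1 - (x c0)^-1^+3 * x c1)
  + x c2^+2 * (x c0)^-1^+2)).
  by move=> x; rewrite /e_t !exprVn.
rep_tac.
Qed.

Lemma rep_ev : rep (fun x : pt K 3 => e_v (x c0) (x c1) (x c2)).
Proof.
apply: (@rep_ext _ (fun x => (x c1)^-1^+2 - (x c1)^-1^+2 * (x c0)^+2 + (x c0)^+2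
  + x c2 * (2 * (x c1)^-1 * x c0 + (x c1)^-1^+3 * (x c0)^-1 - (x c1)^-1^+3 * x c0)
  + x c2^+2 * (x c1)^-1^+2)).
  by move=> x; rewrite /e_v !exprVn.
rep_tac.
Qed.

Definition w1 : 'I_2 -> K := fun i => if val i == 0%N then 2 else 3.

Lemma dens_SL (phi : pt K 3 -> K) : rep phi -> (forall y, USL y -> phi y = 0) ->
  forall x, frakC x -> phi x = 0.
Proof.
move=> hrep hU x [hs [hu hC]].
have hG : (GS 'X_c0 'X_c1 : {mpoly K[2]}).@[w1] != 0 by rewrite GS_ev /=; exact: GS23.
have hyp : forall y, (GS 'X_c0 'X_c1 : {mpoly K[2]}).@[w3 y] != 0 ->
   (lS 'X_c0 'X_c1).@[w3 y] * y c2^+3 + (b2S 'X_c0 'X_c1).@[w3 y] * y c2^+2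
   + (b1S 'X_c0 'X_c1).@[w3 y] * y c2 + (b0S 'X_c0 'X_c1).@[w3 y] = 0 -> phi y = 0.
  move=> y; rewrite GS_ev lS_ev b2S_ev b1S_ev b0S_ev /= => hGy.
  have [hs' hu' _] := GS_nz hGy.
  rewrite C_F // => /eqP; rewrite mulf_eq0 (negbTE (mulf_neq0 (expf_neq0 2 hs') (expf_neq0 2 hu'))) /= => /eqP hCy.
  by apply: hU; split; [split => //; split | rewrite /G3 GS_ev].
apply: (dens_rep (l := lS 'X_c0 'X_c1) (b0 := b0S 'X_c0 'X_c1) (b1 := b1S 'X_c0 'X_c1)
  (b2 := b2S 'X_c0 'X_c1) (H := HS 'X_c0 'X_c1) charK hG hrep hyp hs hu).
  by rewrite lS_ev /= /lS mulf_neq0 ?expf_neq0.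
by rewrite lS_ev b2S_ev b1S_ev b0S_ev /= C_F // hC mulr0.
Qed.

Lemma densU x : frakC x -> zclosure (@USL K) x.
Proof.
move=> hx p hp.
have hrep : rep (fun x : pt K 3 => p.@[x]).
  exact: (rep_meval p (f := fun i (x : pt K 3) => x i) rep_coord).
exact: (dens_SL hrep hp hx).
Qed.

Lemma densV y : frakE0 y -> zclosure (@VSL K) y.
Proof.
move=> hE p hp; apply: E0_vanish hE _ => x hx.
have hrep : rep (fun x : pt K 3 => p.@[emap x]).
  apply: (rep_meval p (f := fun i (x : pt K 3) => emap x i)).
  case=> [[|[|[|[|m]]]] hi] //; rewrite /emap /=.
  - exact: rep_s.
  - exact: rep_et.
  - exact: rep_u.
  - exact: rep_ev.
apply: (dens_SL hrep _ hx) => z hz.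
have [hs hu _ _] := U_facts hz.
have [_ hF] := Feval hs hu.
rewrite -(meval_eq _ hF); apply: hp; exact: F_into_V.
Qed.

Theorem SL_birat : birational (@frakC K) (@frakE0 K).
Proof.
exists (@USL K), (@VSL K), (@faS K), (@fbS K), (@gaS K), (@gbS K); split.
- split; split.
  + exists (fun x => (@G3 K).@[x] != 0); split => //.
    exists (fun p => p = (@G3 K)) => x; split => [h|[p [-> h]]] //; by exists (@G3 K).
  + exact: densU.
  + exists (fun x => (@G4 K).@[x] != 0); split => //.
    exists (fun p => p = (@G4 K)) => x; split => [h|[p [-> h]]] //; by exists (@G4 K).
  + exact: densV.
- move=> x hU; have [hs hu _ _] := U_facts hU; split; first by case: (Feval hs hu).
  exact: F_into_V.
- move=> y hV; have [hs hu hH _] := V_facts hV; split; first by case: (Geval hs hu hH).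
  exact: G_into_U.
- exact: GF.
- exact: FG.
Qed.
End SLdens.

Section PSLdefs.
Variable R : comNzRingType.
Implicit Types s u c t v : R.
Definition lB s u : R := 1.
Definition b0B s u := s*u*(s - 1)*(u - 1).
Definition b1B s u := 1 - s - u + 4*s*u - s^+2*u - s*u^+2 + s^+2*u^+2.
Definition b2B s u := 2 - s - u + 2*s*u.
Definition HB s u := s - u.
Definition GB s u := lB s u * DiscF (lB s u) (b2B s u) (b1B s u) (b0B s u) * (s * u * HB s u).
Definition TnB s u c := s*u - s*u^+2 + s^+2*u^+2 + c*(2*s*u + 1 - u) + c^+2.
Definition cnB s t u v := s*u*(t*s - v*u - s + u).
Definition TnHB s u cn cd := s*u*cd^+2 - s*u^+2*cd^+2 + s^+2*u^+2*cd^+2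
   + cn*cd*(2*s*u + 1 - u) + cn^+2.
Definition P1B s t u v := TnHB s u (cnB s t u v) (HB s u) - s^+2*u*(HB s u)^+2*t.
Definition P2B s t u v := TnHB u s (cnB s t u v) (HB s u) - u^+2*s*(HB s u)^+2*v.
Definition P3B s t u v := lB s u * (cnB s t u v)^+3 + b2B s u * (cnB s t u v)^+2 * HB s u
   + b1B s u * cnB s t u v * (HB s u)^+2 + b0B s u * (HB s u)^+3.
End PSLdefs.

Section MorphB.
Variables (R S : comNzRingType) (f : {rmorphism R -> S}).
Lemma lB_m s u : f (lB s u) = lB (f s) (f u). Proof. by rewrite /lB rmorph1. Qed.
Lemma b0B_m s u : f (b0B s u) = b0B (f s) (f u). Proof. by rewrite /b0B; morph. Qed.
Lemma b1B_m s u : f (b1B s u) = b1B (f s) (f u). Proof. by rewrite /b1B; morph. Qed.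
Lemma b2B_m s u : f (b2B s u) = b2B (f s) (f u). Proof. by rewrite /b2B; morph. Qed.
Lemma HB_m s u : f (HB s u) = HB (f s) (f u). Proof. by rewrite /HB; morph. Qed.
Lemma GB_m s u : f (GB s u) = GB (f s) (f u).
Proof. by rewrite /GB rmorphM rmorphM DiscF_morph !lB_m !b0B_m !b1B_m !b2B_m rmorphM rmorphM HB_m. Qed.
Lemma TnB_m s u c : f (TnB s u c) = TnB (f s) (f u) (f c). Proof. by rewrite /TnB; morph. Qed.
Lemma cnB_m s t u v : f (cnB s t u v) = cnB (f s) (f t) (f u) (f v). Proof. by rewrite /cnB; morph. Qed.
Lemma TnHB_m s u a b : f (TnHB s u a b) = TnHB (f s) (f u) (f a) (f b). Proof. by rewrite /TnHB; morph. Qed.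
Lemma P1B_m s t u v : f (P1B s t u v) = P1B (f s) (f t) (f u) (f v).
Proof. by rewrite /P1B; morph; rewrite ?TnHB_m ?cnB_m ?HB_m. Qed.
Lemma P2B_m s t u v : f (P2B s t u v) = P2B (f s) (f t) (f u) (f v).
Proof. by rewrite /P2B; morph; rewrite ?TnHB_m ?cnB_m ?HB_m. Qed.
Lemma P3B_m s t u v : f (P3B s t u v) = P3B (f s) (f t) (f u) (f v).
Proof. by rewrite /P3B !(lB_m, b0B_m, b1B_m, b2B_m, cnB_m, HB_m, rmorph_nat, rmorph1, rmorphN, rmorphB, rmorphD, rmorphM, rmorphXn). Qed.
End MorphB.

Section PSLfield.
Variable K : fieldType.
Variables s u : K.
Hypotheses (hs : s != 0) (hu : u != 0).

Lemma C_FB c : lB s u * c^+3 + b2B s u * c^+2 + b1B s u * c + b0B s u = Cbar_eq s u c.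
Proof. by rewrite /lB /b2B /b1B /b0B /Cbar_eq; ring. Qed.

Lemma etB_ne0 c : Cbar_eq s u c = 0 -> ebar_t s u c != 0.
Proof.
move=> hC; apply/eqP => ht.
have : ebar_t s u c * ((u^-1 - s * u^-1 + s) + (2*u^-1 - s*u^-1 + s)*c + u^-1*c^+2)
   = 1 + ((s^-2*u^-2 + s^-1*u^-1) + s^-2*u^-2*c) * Cbar_eq s u c.
  by rewrite /ebar_t /Cbar_eq; field; rewrite hs hu.
by rewrite ht hC mul0r mulr0 addr0 => /eqP; rewrite eq_sym oner_eq0.
Qed.

Lemma cnB_id c : cnB s (ebar_t s u c) u (ebar_v s u c) = c * HB s u.
Proof. by rewrite /cnB /ebar_t /ebar_v /HB; field; rewrite hs hu. Qed.
Lemma P1B_id c : P1B s (ebar_t s u c) u (ebar_v s u c) = 0.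
Proof. by rewrite /P1B /TnHB /cnB /ebar_t /ebar_v /HB; field; rewrite hs hu. Qed.
Lemma P2B_id c : P2B s (ebar_t s u c) u (ebar_v s u c) = 0.
Proof. by rewrite /P2B /TnHB /cnB /ebar_t /ebar_v /HB; field; rewrite hs hu. Qed.
Lemma P3B_id c : P3B s (ebar_t s u c) u (ebar_v s u c) = (HB s u)^+3 * Cbar_eq s u c.
Proof. by rewrite /P3B /lB /b0B /b1B /b2B /cnB /ebar_t /ebar_v /HB /Cbar_eq; field; rewrite hs hu. Qed.

Hypothesis hH : HB s u != 0.
Let hH' : s - u != 0. Proof. exact: hH. Qed.

Lemma P1B_back t v : P1B s t u v = 0 -> ebar_t s u (cnB s t u v / HB s u) = t.
Proof.
have -> : P1B s t u v = s^+2*u*(HB s u)^+2 * (ebar_t s u (cnB s t u v / HB s u) - t).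
  by rewrite /P1B /TnHB /cnB /ebar_t /HB; field; rewrite hs hu hH'.
move/eqP; rewrite !mulf_eq0 ?expf_eq0 /= (negbTE hs) (negbTE hu) (negbTE hH) /=.
by rewrite subr_eq0 => /eqP.
Qed.
Lemma P2B_back t v : P2B s t u v = 0 -> ebar_v s u (cnB s t u v / HB s u) = v.
Proof.
have -> : P2B s t u v = u^+2*s*(HB s u)^+2 * (ebar_v s u (cnB s t u v / HB s u) - v).
  by rewrite /P2B /TnHB /cnB /ebar_v /HB; field; rewrite hs hu hH'.
move/eqP; rewrite !mulf_eq0 ?expf_eq0 /= (negbTE hs) (negbTE hu) (negbTE hH) /=.
by rewrite subr_eq0 => /eqP.
Qed.
Lemma P3B_back t v : P3B s t u v = 0 -> Cbar_eq s u (cnB s t u v / HB s u) = 0.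
Proof.
have -> : P3B s t u v = (HB s u)^+3 * Cbar_eq s u (cnB s t u v / HB s u).
  by rewrite /P3B /lB /b0B /b1B /b2B /cnB /Cbar_eq /HB; field; rewrite hH'.
move/eqP; rewrite !mulf_eq0 ?expf_eq0 /= (negbTE hH) /=.
by move/eqP.
Qed.
Lemma cnB_back c : cnB s (ebar_t s u c) u (ebar_v s u c) / HB s u = c.
Proof. by rewrite cnB_id mulfK. Qed.
End PSLfield.

Lemma TnB_t (K : fieldType) (s u c : K) : s != 0 -> u != 0 -> TnB s u c / (s^+2*u) = ebar_t s u c.
Proof. by move=> hs hu; rewrite /TnB /ebar_t; field; rewrite hs hu. Qed.
Lemma TnB_v (K : fieldType) (s u c : K) : s != 0 -> u != 0 -> TnB u s c / (u^+2*s) = ebar_v s u c.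
Proof. by move=> hs hu; rewrite /TnB /ebar_v; field; rewrite hs hu. Qed.
Lemma CB_sym (K : fieldType) (s u c : K) : Cbar_eq s u c = Cbar_eq u s c.
Proof. by rewrite /Cbar_eq; ring. Qed.

Section EvalsB.
Variables (K : fieldType) (n : nat) (v : 'I_n -> K).
Lemma lB_ev i j : (lB 'X_i 'X_j).@[v] = lB (v i) (v j). Proof. by rewrite lB_m /= !mevalXU. Qed.
Lemma b0B_ev i j : (b0B 'X_i 'X_j).@[v] = b0B (v i) (v j). Proof. by rewrite b0B_m /= !mevalXU. Qed.
Lemma b1B_ev i j : (b1B 'X_i 'X_j).@[v] = b1B (v i) (v j). Proof. by rewrite b1B_m /= !mevalXU. Qed.
Lemma b2B_ev i j : (b2B 'X_i 'X_j).@[v] = b2B (v i) (v j). Proof. by rewrite b2B_m /= !mevalXU. Qed.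
Lemma HB_ev i j : (HB 'X_i 'X_j).@[v] = HB (v i) (v j). Proof. by rewrite HB_m /= !mevalXU. Qed.
Lemma GB_ev i j : (GB 'X_i 'X_j).@[v] = GB (v i) (v j). Proof. by rewrite GB_m /= !mevalXU. Qed.
Lemma TnB_ev i j k : (TnB 'X_i 'X_j 'X_k).@[v] = TnB (v i) (v j) (v k).
Proof. by rewrite TnB_m /= !mevalXU. Qed.
Lemma cnB_ev i j k l : (cnB 'X_i 'X_j 'X_k 'X_l).@[v] = cnB (v i) (v j) (v k) (v l).
Proof. by rewrite cnB_m /= !mevalXU. Qed.
Lemma P1B_ev i j k l : (P1B 'X_i 'X_j 'X_k 'X_l).@[v] = P1B (v i) (v j) (v k) (v l).
Proof. by rewrite P1B_m /= !mevalXU. Qed.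
Lemma P2B_ev i j k l : (P2B 'X_i 'X_j 'X_k 'X_l).@[v] = P2B (v i) (v j) (v k) (v l).
Proof. by rewrite P2B_m /= !mevalXU. Qed.
Lemma P3B_ev i j k l : (P3B 'X_i 'X_j 'X_k 'X_l).@[v] = P3B (v i) (v j) (v k) (v l).
Proof. by rewrite P3B_m /= !mevalXU. Qed.
End EvalsB.

Lemma GB23 (K : closedFieldType) (charK : [pchar K] =i pred0) : GB (2 : K) 3 != 0.
Proof.
have -> : GB (2 : K) 3 = 2^+3 * 3 * 971%:R.
  by rewrite /GB /lB /DiscF /b0B /b1B /b2B /HB; ring.
by rewrite !mulf_neq0 ?expf_neq0 // (natK_neq0 charK).
Qed.

Section PSLmain2.
Variable K : closedFieldType.
Hypothesis charK : [pchar K] =i pred0.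

Definition GB3 : {mpoly K[3]} := GB 'X_c0 'X_c1.
Definition GB4 : {mpoly K[4]} := GB 'X_c0 'X_c2.
Definition UB (x : pt K 3) := frakCbar x /\ GB3.@[x] != 0.
Definition VB (y : pt K 4) := frakE0bar y /\ GB4.@[y] != 0.

Definition faB (i : 'I_4) : {mpoly K[3]} :=
  match val i with 0%N => 'X_c0 | 1%N => TnB 'X_c0 'X_c1 'X_c2 | 2%N => 'X_c1
  | _ => TnB 'X_c1 'X_c0 'X_c2 end.
Definition fbB (i : 'I_4) : {mpoly K[3]} :=
  match val i with 1%N => 'X_c0^+2 * 'X_c1 | 3%N => 'X_c1^+2 * 'X_c0 | _ => 1 end.
Definition gaB (i : 'I_3) : {mpoly K[4]} :=
  match val i with 0%N => 'X_c0 | 1%N => 'X_c2 | _ => cnB 'X_c0 'X_c1 'X_c2 'X_c3 end.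
Definition gbB (i : 'I_3) : {mpoly K[4]} :=
  match val i with 2%N => HB 'X_c0 'X_c2 | _ => 1 end.

Definition GptB (y : pt K 4) : pt K 3 := fun i =>
  match val i with 0%N => y c0 | 1%N => y c2
  | _ => cnB (y c0) (y c1) (y c2) (y c3) / HB (y c0) (y c2) end.

Lemma FevalB x : x c0 != 0 -> x c1 != 0 ->
  rat_defined fbB x /\ forall i, rat_eval faB fbB x i = ebarmap x i.
Proof.
move=> hs hu; split.
  case=> [[|[|[|[|m]]]] hi] //=; rewrite /fbB /= ?meval1 ?oner_neq0 //.
    by rewrite mevalM mevalXn !mevalXU mulf_neq0 ?expf_neq0.
  by rewrite mevalM mevalXn !mevalXU mulf_neq0 ?expf_neq0.
case=> [[|[|[|[|m]]]] hi] //=; rewrite /rat_eval /faB /fbB /ebarmap /=.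
- by rewrite mevalXU meval1 divr1.
- by rewrite TnB_ev mevalM mevalXn !mevalXU TnB_t.
- by rewrite mevalXU meval1 divr1.
- by rewrite TnB_ev mevalM mevalXn !mevalXU TnB_v.
Qed.

Lemma GevalB y : y c0 != 0 -> y c2 != 0 -> HB (y c0) (y c2) != 0 ->
  rat_defined gbB y /\ forall i, rat_eval gaB gbB y i = GptB y i.
Proof.
move=> hs hu hH; split.
  by case=> [[|[|[|m]]] hi] //=; rewrite /gbB /= ?meval1 ?oner_neq0 // HB_ev.
case=> [[|[|[|m]]] hi] //=; rewrite /rat_eval /gaB /gbB /GptB /=.
- by rewrite mevalXU meval1 divr1.
- by rewrite mevalXU meval1 divr1.
- by rewrite cnB_ev HB_ev.
Qed.


Lemma GB_nz (s u : K) : GB s u != 0 -> [/\ s != 0, u != 0 & HB s u != 0].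
Proof.
by rewrite /GB !mulf_eq0 !negb_or => /andP[_ /andP[/andP[-> ->] ->]].
Qed.

Lemma UB_facts x : UB x ->
  [/\ x c0 != 0, x c1 != 0, HB (x c0) (x c1) != 0 & Cbar_eq (x c0) (x c1) (x c2) = 0].
Proof.
by case=> [[hs [hu hC]]]; rewrite /GB3 GB_ev => /GB_nz [_ _ hH].
Qed.

Lemma E0B_vanish y (p : {mpoly K[4]}) : frakE0bar y ->
  (forall x, frakCbar x -> p.@[ebarmap x] = 0) -> p.@[y] = 0.
Proof.
case=> _ hcl hp; apply: hcl => z [x [hx hz]].
by rewrite (meval_eq _ hz); apply: hp.
Qed.

Lemma FB_into_V x : UB x -> VB (rat_eval faB fbB x).
Proof.
move=> hU; have [hs hu hH hC] := UB_facts hU.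
have [_ hF] := FevalB hs hu.
split; last by rewrite /GB4 GB_ev !hF /=; case: hU; rewrite /GB3 GB_ev.
split.
  case=> [[|[|[|[|m]]]] hi] //; rewrite hF /ebarmap /=.
  - exact: hs.
  - exact: etB_ne0.
  - exact: hu.
  - by rewrite /ebar_v -/(ebar_t (x c1) (x c0) (x c2)); apply: etB_ne0; rewrite // -CB_sym.
move=> p hp; apply: hp; exists x; split => //; by case: hU.
Qed.

Lemma VB_facts y : VB y ->
  [/\ y c0 != 0, y c2 != 0, HB (y c0) (y c2) != 0 & frakE0bar y].
Proof.
case=> hE; rewrite /GB4 GB_ev => /GB_nz [hs hu hH]; split => //.
Qed.

Lemma GB_into_U y : VB y -> UB (rat_eval gaB gbB y).
Proof.
move=> hV; have [hs hu hH hE] := VB_facts hV.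
have [_ hG] := GevalB hs hu hH.
split; last by rewrite /GB3 GB_ev !hG /GptB /=; case: hV; rewrite /GB4 GB_ev.
rewrite /frakCbar !hG /GptB /=; split => //; split => //.
apply: P3B_back => //.
have := E0B_vanish (p := P3B 'X_c0 'X_c1 'X_c2 'X_c3) hE.
rewrite P3B_ev; apply => x [hx0 [hx1 hC]].
by rewrite P3B_ev /ebarmap /= P3B_id // hC mulr0.
Qed.

Lemma GFB x : UB x -> forall i, rat_eval gaB gbB (rat_eval faB fbB x) i = x i.
Proof.
move=> hU; have [hs hu hH hC] := UB_facts hU.
have [_ hF] := FevalB hs hu.
have [hs' hu' hH' _] := VB_facts (FB_into_V hU).
have [_ hG] := GevalB hs' hu' hH'.
case=> [[|[|[|m]]] hi] //; rewrite hG /GptB !hF /ebarmap /=.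
- by congr x; apply: val_inj.
- by congr x; apply: val_inj.
- by rewrite cnB_back //; congr x; apply: val_inj.
Qed.

Lemma FGB y : VB y -> forall j, rat_eval faB fbB (rat_eval gaB gbB y) j = y j.
Proof.
move=> hV; have [hs hu hH hE] := VB_facts hV.
have [_ hG] := GevalB hs hu hH.
have [hs' hu' _ _] := UB_facts (GB_into_U hV).
have [_ hF] := FevalB hs' hu'.
case=> [[|[|[|[|m]]]] hi] //; rewrite hF /ebarmap !hG /GptB /=.
- by congr y; apply: val_inj.
- rewrite P1B_back //; first by congr y; apply: val_inj.
  have := E0B_vanish (p := P1B 'X_c0 'X_c1 'X_c2 'X_c3) hE.
  rewrite P1B_ev; apply => x [hx0 [hx1 hC]].
  by rewrite P1B_ev /ebarmap /= P1B_id.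
- by congr y; apply: val_inj.
- rewrite P2B_back //; first by congr y; apply: val_inj.
  have := E0B_vanish (p := P2B 'X_c0 'X_c1 'X_c2 'X_c3) hE.
  rewrite P2B_ev; apply => x [hx0 [hx1 hC]].
  by rewrite P2B_ev /ebarmap /= P2B_id.
Qed.
End PSLmain2.

Section PSLdens.
Variable K : closedFieldType.
Hypothesis charK : [pchar K] =i pred0.

Ltac rep_tac := repeat first
  [ apply: repD | apply: repN | apply: repX | apply: repM
  | exact: rep_s | exact: rep_u | exact: rep_c | exact: rep_si | exact: rep_ui | exact: repC ].

Lemma rep_etB : rep (fun x : pt K 3 => ebar_t (x c0) (x c1) (x c2)).
Proof.
apply: (@rep_ext _ (fun x => (x c0)^-1 - (x c0)^-1 * x c1 + x c1
  + x c2 * (2 * (x c0)^-1 + (x c0)^-1^+2 * (x c1)^-1 - (x c0)^-1^+2)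
  + x c2^+2 * (x c0)^-1^+2 * (x c1)^-1)).
  by move=> x; rewrite /ebar_t !exprVn.
rep_tac.
Qed.

Lemma rep_evB : rep (fun x : pt K 3 => ebar_v (x c0) (x c1) (x c2)).
Proof.
apply: (@rep_ext _ (fun x => (x c1)^-1 - (x c1)^-1 * x c0 + x c0
  + x c2 * (2 * (x c1)^-1 + (x c1)^-1^+2 * (x c0)^-1 - (x c1)^-1^+2)
  + x c2^+2 * (x c1)^-1^+2 * (x c0)^-1)).
  by move=> x; rewrite /ebar_v !exprVn.
rep_tac.
Qed.

Definition w1B : 'I_2 -> K := fun i => if val i == 0%N then 2 else 3.

Lemma dens_PSL (phi : pt K 3 -> K) : rep phi -> (forall y, UB y -> phi y = 0) ->
  forall x, frakCbar x -> phi x = 0.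
Proof.
move=> hrep hU x [hs [hu hC]].
have hG : (GB 'X_c0 'X_c1 : {mpoly K[2]}).@[w1B] != 0 by rewrite GB_ev /=; exact: GB23.
have hyp : forall y, (GB 'X_c0 'X_c1 : {mpoly K[2]}).@[w3 y] != 0 ->
   (lB 'X_c0 'X_c1).@[w3 y] * y c2^+3 + (b2B 'X_c0 'X_c1).@[w3 y] * y c2^+2
   + (b1B 'X_c0 'X_c1).@[w3 y] * y c2 + (b0B 'X_c0 'X_c1).@[w3 y] = 0 -> phi y = 0.
  move=> y; rewrite GB_ev lB_ev b2B_ev b1B_ev b0B_ev /= => hGy.
  have [hs' hu' _] := GB_nz hGy.
  rewrite C_FB => hCy.
  by apply: hU; split; [split => //; split | rewrite /GB3 GB_ev].
apply: (dens_rep (l := lB 'X_c0 'X_c1) (b0 := b0B 'X_c0 'X_c1) (b1 := b1B 'X_c0 'X_c1)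
  (b2 := b2B 'X_c0 'X_c1) (H := HB 'X_c0 'X_c1) charK hG hrep hyp hs hu).
  by rewrite lB_ev /= /lB oner_neq0.
by rewrite lB_ev b2B_ev b1B_ev b0B_ev /= C_FB.
Qed.

Lemma densUB x : frakCbar x -> zclosure (@UB K) x.
Proof.
move=> hx p hp.
have hrep : rep (fun x : pt K 3 => p.@[x]).
  exact: (rep_meval p (f := fun i (x : pt K 3) => x i) (@rep_coord K)).
exact: (dens_PSL hrep hp hx).
Qed.

Lemma densVB y : frakE0bar y -> zclosure (@VB K) y.
Proof.
move=> hE p hp; apply: E0B_vanish hE _ => x hx.
have hrep : rep (fun x : pt K 3 => p.@[ebarmap x]).
  apply: (rep_meval p (f := fun i (x : pt K 3) => ebarmap x i)).
  case=> [[|[|[|[|m]]]] hi] //; rewrite /ebarmap /=.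
  - exact: rep_s.
  - exact: rep_etB.
  - exact: rep_u.
  - exact: rep_evB.
apply: (dens_PSL hrep _ hx) => z hz.
have [hs hu _ _] := UB_facts hz.
have [_ hF] := FevalB hs hu.
rewrite -(meval_eq _ hF); apply: hp; exact: FB_into_V.
Qed.

Theorem PSL_birat : birational (@frakCbar K) (@frakE0bar K).
Proof.
exists (@UB K), (@VB K), (@faB K), (@fbB K), (@gaB K), (@gbB K); split.
- split; split.
  + exists (fun x => (@GB3 K).@[x] != 0); split => //.
    exists (fun p => p = (@GB3 K)) => x; split => [h|[p [-> h]]] //; by exists (@GB3 K).
  + exact: densUB.
  + exists (fun x => (@GB4 K).@[x] != 0); split => //.
    exists (fun p => p = (@GB4 K)) => x; split => [h|[p [-> h]]] //; by exists (@GB4 K).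
  + exact: densVB.
- move=> x hU; have [hs hu _ _] := UB_facts hU; split; first by case: (FevalB hs hu).
  exact: FB_into_V.
- move=> y hV; have [hs hu hH _] := VB_facts hV; split; first by case: (GevalB hs hu hH).
  exact: GB_into_U.
- exact: GFB.
- exact: FGB.
Qed.
End PSLdens.


Unset Implicit Arguments.
Theorem mainTheorem7 (K : closedFieldType) (charK : [pchar K] =i pred0) :
  birational (@frakC K) (@frakE0 K) /\ birational (@frakCbar K) (@frakE0bar K).
Proof. split; [exact: (SL_birat charK) | exact: (PSL_birat charK)]. Qed.
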